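(* Let $u,v$ be positive integers with $uv\equiv 4,8\pmod{12}$ and $v$ even. Then $\Phi(u\times v,4,2)\le\left\lfloor\frac{u}{4}\left(\left\lfloor\frac{uv-1}{3}\left\lfloor\frac{uv-2}{2}\right\rfloor\right\rfloor-1\right)\right\rfloor$.
   Context: A 2-D $(u\times v,4,2)$-OOC is a family $\mathcal C$ of $u\times v$ $(0,1)$-matrices of Hamming weight $4$ such that for all $A=(a_{ij}),B=(b_{ij})\in\mathcal C$ and integers $r$ with $A\ne B$ or $r\not\equiv0\pmod v$, $\sum_{i,j}a_{ij}b_{i,j+r}\le 2$ (column indices mod $v$). $\Phi(u\times v,4,2)$ is the largest size of such a code. *)

(* Defs.v *)
From mathcomp Require Import all_boot all_algebra.
Set Implicit Arguments. Unset Strict Implicit. Unset Printing Implicit Defensive.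

Definition hweight (u v : nat) (A : 'M[bool]_(u, v)) : nat :=
  #|[set ij : 'I_u * 'I_v | A ij.1 ij.2]|.

(* column index j + r taken modulo v (v > 0 assumed when used) *)
Definition shift_col (v : nat) (j : 'I_v) (r : nat) : nat := (j + r) %% v.

Definition corr (u v : nat) (A B : 'M[bool]_(u, v)) (r : nat) : nat :=
  \sum_(i < u) \sum_(j < v)
    (A i j && [exists j' : 'I_v, (val j' == shift_col j r) && B i j'] : nat).

(* Shifts r range over naturals; every integer shift is congruent mod v
   to a natural one. *)
Definition is_OOC (u v w lam : nat) (C : {set 'M[bool]_(u, v)}) : Prop :=
  (forall A, A \in C -> hweight A = w) /\
  (forall A B (r : nat), A \in C -> B \in C ->
     (A != B) || (r %% v != 0) -> corr A B r <= lam).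

Definition lemma5p4_bound (u v : nat) : nat :=
  (u * ((((u * v - 1) * ((u * v - 2) %/ 2)) %/ 3) - 1)) %/ 4.

(* Main.v *)
Require Import Defs.
From mathcomp Require Import all_boot all_algebra zify ring.
Set Implicit Arguments. Unset Strict Implicit. Unset Printing Implicit Defensive.

Lemma cardE_sum (T : finType) (A : {pred T}) : #|A| = \sum_x (x \in A : nat).
Proof. rewrite -sum1_card big_mkcond /=; apply: eq_bigr => x _; by case: (x \in A). Qed.

Lemma dcount (T1 T2 : finType) (S : {set T1}) (F : T1 -> {set T2}) :
  \sum_(a in S) #|F a| = \sum_b #|[set a in S | b \in F a]|.
Proof.
under eq_bigr do rewrite cardE_sum.
rewrite exchange_big /=; apply: eq_bigr => b _.
rewrite cardE_sum big_mkcond /=; apply: eq_bigr => a _.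
by rewrite !inE; case: (a \in S).
Qed.

Section Main.
Variables (u n : nat).
Local Notation w := n.+1.
Local Notation P := (('I_u * 'I_w)%type).
Local Notation M := 'M[bool]_(u, w).
Variable C : {set M}.
Hypothesis HC : is_OOC 4 2 C.
Variable i : 'I_u.

Definition addc (j : 'I_w) (s : nat) : 'I_w := Ordinal (ltn_pmod (j + s) (ltn0Sn n)).
Definition blk (d : M * 'I_w) : {set P} := [set p : P | d.1 p.1 (addc p.2 d.2)].
Definition Dset : {set M * 'I_w} := [set d | (d.1 \in C) && d.1 i d.2].
Definition x0 : P := (i, ord0).

Lemma addc_inj s : injective (addc ^~ s).
Proof.
move=> a b /(congr1 val) /= /eqP; rewrite eqn_modDr !modn_small ?ltn_ord // => /eqP H.
exact: val_inj.
Qed.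

Lemma addc_ord0 (j : 'I_w) : addc ord0 j = j.
Proof. by apply: val_inj; rewrite /= add0n modn_small. Qed.

Lemma addcA (j : 'I_w) s t : addc (addc j s) t = addc j (s + t).
Proof. by apply: val_inj; rewrite /= modnDml addnA. Qed.

Lemma x0_blk d : d \in Dset -> x0 \in blk d.
Proof. by rewrite !inE /= addc_ord0 => /andP[]. Qed.

Lemma blk_card d : d.1 \in C -> #|blk d| = 4.
Proof.
move=> dC.
have -> : blk d = (fun p : P => (p.1, addc p.2 d.2)) @^-1: [set p : P | d.1 p.1 p.2].
  by apply/setP => p; rewrite !inE.
rewrite card_preimset; first exact: HC.1.
by move=> [a b] [a' b'] /= [-> E]; congr (_, _); apply: (addc_inj (s:=d.2)); exact: val_inj.
Qed.

Lemma corr_card (A B : M) r :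
  corr A B r = #|[set p : P | A p.1 p.2 && B p.1 (addc p.2 r)]|.
Proof.
rewrite /corr pair_bigA cardE_sum; apply: eq_bigr => p _; rewrite inE.
congr (nat_of_bool (_ && _)).
apply/existsP/idP => [[j' /andP[/eqP E Bj]] | Bj].
  have -> : addc p.2 r = j' by apply: val_inj; rewrite /= E.
  done.
by exists (addc p.2 r); rewrite eqxx Bj.
Qed.

Lemma inter_card (A B : M) (j1 j2 : 'I_w) :
  #|blk (A, j1) :&: blk (B, j2)| = corr A B (w - j1 + j2).
Proof.
rewrite corr_card.
have -> : blk (A, j1) :&: blk (B, j2) = (fun p : P => (p.1, addc p.2 j1)) @^-1:
   [set p : P | A p.1 p.2 && B p.1 (addc p.2 (w - j1 + j2))].
  apply/setP => p; rewrite !inE /= addcA.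
  have -> : addc p.2 (j1 + (w - j1 + j2)) = addc p.2 j2; last by [].
  apply: val_inj => /=.
  have -> : p.2 + (j1 + (w - j1 + j2)) = (p.2 + j2) + w.
    have := ltn_ord j1; lia.
  by rewrite modnDr.
rewrite card_preimset //.
by move=> [a b] [a' b'] /= [-> E]; congr (_, _); apply: (addc_inj (s:=j1)); exact: val_inj.
Qed.

Lemma Kint d1 d2 : d1 \in Dset -> d2 \in Dset -> d1 != d2 -> #|blk d1 :&: blk d2| <= 2.
Proof.
case: d1 => A j1; case: d2 => B j2; rewrite !inE /= => /andP[AC _] /andP[BC _] neq.
rewrite inter_card; apply: HC.2 => //.
case: (eqVneq A B) => [eAB|//]; subst B.
rewrite xpair_eqE eqxx /= in neq.
move/eqP: neq => neq.
rewrite /=. have {}neq : (j1:nat) <> j2 by move=> E; apply: neq; exact: val_inj.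
have h1 := ltn_ord j1; have h2 := ltn_ord j2.
case: (leqP j1 j2) => h.
  have -> : w - j1 + j2 = (j2 - j1) + w by lia.
  rewrite modnDr modn_small; lia.
rewrite modn_small; lia.
Qed.


Lemma le1 (x z p : P) : x != z -> x != p -> z != p ->
  #|[set d in Dset | [&& x \in blk d, z \in blk d & p \in blk d]]| <= 1.
Proof.
move=> xz xp zp; apply/card_le1_eqP => d1 d2.
rewrite inE => /andP[D1 /and3P[x1 z1 p1]]; rewrite inE => /andP[D2 /and3P[x2 z2 p2]].
case: (eqVneq d1 d2) => // neq; exfalso.
have := Kint D1 D2 neq.
have sub : x |: (z |: [set p]) \subset blk d1 :&: blk d2.
  by apply/subsetP => q; rewrite in_setI !in_setU1 in_set1 => /or3P[] /eqP ->; apply/andP; split.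
have := subset_leq_card sub.
rewrite !cardsU1 cards1 !inE (negbTE xz) (negbTE xp) (negbTE zp) /=.
move=> h1 h2; have := leq_trans h1 h2; by [].
Qed.

Definition deg (z : P) := #|[set d in Dset | z \in blk d]|.

Lemma deg_bound z : z != x0 -> 2 * deg z <= #|{: P}| - 2.
Proof.
move=> zx.
set Dz := [set d in Dset | z \in blk d].
have E : \sum_(d in Dz) #|blk d :\: [set x0; z]| = 2 * #|Dz|.
  rewrite mulnC -sum_nat_const; apply: eq_bigr => d.
  rewrite inE => /andP[dD zd].
  have dC : d.1 \in C by move: dD; rewrite inE => /andP[].
  have sub : [set x0; z] \subset blk d.
    by apply/subsetP => q; rewrite in_set2 => /orP[] /eqP ->; [exact: x0_blk | exact: zd].
  by rewrite cardsD (setIidPr sub) blk_card // cards2 eq_sym zx.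
rewrite /deg -/Dz -E dcount.
have -> : #|{: P}| - 2 = \sum_q (q \notin [set x0; z] : nat).
  rewrite -(cardsC [set x0; z]) cards2 eq_sym zx addKn cardE_sum.
  by apply: eq_bigr => q _; rewrite inE.
apply: leq_sum => q _.
case: (boolP (q \in [set x0; z])) => hq /=.
  rewrite leqn0 cards_eq0; apply/eqP/setP => d; rewrite inE in_set0 in_setD hq.
  by rewrite andbF.
apply: leq_trans (le1 (x := x0) (z := z) (p := q) _ _ _).
  apply: subset_leq_card; apply/subsetP => d; rewrite inE [d \in Dz]inE in_setD.
  move=> /andP[/andP[dD zd] /andP[_ qd]]; rewrite inE dD zd qd x0_blk //.
- by rewrite eq_sym.
- by apply: contra hq => /eqP ->; rewrite !inE eqxx.
- by apply: contra hq => /eqP <-; rewrite !inE eqxx orbT.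
Qed.


Definition hh := w./2.
Definition y0 : P := (i, inord hh).

Lemma deg_y0_even : ~~ odd w -> ~~ odd (deg y0).
Proof.
move=> ev.
have Ew : hh + hh = w.
  by have := odd_double_half w; rewrite (negbTE ev) add0n -addnn.
have hlt : hh < w by lia.
have hv : val (inord hh : 'I_w) = hh := inordK hlt.
pose f (d : M * 'I_w) := (d.1, addc d.2 hh).
have ff : cancel f f.
  move=> [A j]; rewrite /f /= addcA Ew; congr (_, _); apply: val_inj => /=.
  by rewrite modnDr modn_small.
set Dy := [set d in Dset | y0 \in blk d].
have fD : forall d, d \in Dy -> f d \in Dy.
  move=> [A j]; rewrite !inE /= => /andP[/andP[AC Aj] Ay].
  have e1 : addc j hh = addc (inord hh) j by apply: val_inj; rewrite /= hv addnC.
  have e2 : addc (inord hh) ((j + hh) %% w) = j.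
    apply: val_inj; rewrite /= hv modnDmr.
    by rewrite addnCA addnC Ew addnC modnDr modn_small.
  by rewrite AC e2 Aj e1 Ay.
set B := [set d : M * 'I_w | d.2 < hh].
have EB : Dy :\: B = f @: (Dy :&: B).
  apply/setP => [[A j]]; apply/idP/imsetP.
    rewrite in_setD inE -leqNgt => /andP[hd dD].
    exists (f (A, j)); last by rewrite ff.
    rewrite in_setI fD // inE /=.
    have hd2 := ltn_ord j.
    rewrite /= in hd.
    have -> : j + hh = (j - hh) + w by lia.
    rewrite modnDr modn_small; lia.
  move=> [[A' j']]; rewrite in_setI => /andP[eD he] ->.
  rewrite in_setD (fD _ eD) inE /= andbT -leqNgt.
  have he2 := ltn_ord j'; rewrite inE /= in he; rewrite modn_small; lia.
have := cardsID B Dy; rewrite EB card_imset; last exact: can_inj ff.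
rewrite /deg -/Dy => <-; by rewrite addnn odd_double.
Qed.

Lemma y0x0 : ~~ odd w -> y0 != x0.
Proof.
move=> ev; apply/negP => /eqP [] /(congr1 val).
have := odd_double_half w; rewrite (negbTE ev) add0n -addnn.
rewrite /= inordK /hh; lia.
Qed.


Lemma row_bound : ~~ odd w -> #|{: P}| %% 4 = 0 ->
  6 * #|Dset| + 2 <= (#|{: P}| - 1) * (#|{: P}| - 2).
Proof.
move=> ev N4.
set N := #|{: P}|.
pose dg z := #|[set d in Dset | z \in blk d :\ x0]|.
have E3 : 3 * #|Dset| = \sum_z dg z.
  rewrite /dg -dcount mulnC -sum_nat_const; apply: eq_bigr => d dD.
  have dC : d.1 \in C by move: dD; rewrite inE => /andP[].
  have := cardsD1 x0 (blk d); rewrite x0_blk // blk_card // => h; apply: succn_inj; exact: h.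
have yx := y0x0 ev.
have Hz : forall z, 2 * dg z <= (z != x0) * (N - 2).
  move=> z; case: (eqVneq z x0) => [->|zx].
    rewrite /= mul0n leqn0 muln_eq0 cards_eq0; apply/orP; right.
    by apply/eqP/setP => d; rewrite inE in_set0 in_setD1 eqxx andbF.
  rewrite /= mul1n.
  have -> : dg z = deg z.
    by apply: eq_card => d; rewrite !inE zx.
  exact: deg_bound.
have Hy : 2 * dg y0 <= N - 4.
  have -> : dg y0 = deg y0.
    by apply: eq_card => d; rewrite !inE yx.
  have ev' := deg_y0_even ev; have hb := deg_bound yx.
  have E := odd_double_half (deg y0).
  rewrite (negbTE ev') add0n -mul2n in E.
  rewrite -/N in hb; lia.
have Hc : \sum_(z | z != y0) (z != x0 : nat) = N - 2.
  have -> : N - 2 = #|[set z | (z != y0) && (z != x0)]|.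
    have -> : [set z | (z != y0) && (z != x0)] = ~: [set y0; x0].
      by apply/setP => z; rewrite !inE negb_or.
    by have := cardsC [set y0; x0]; rewrite cards2 yx /N => <-; rewrite addKn.
  rewrite cardE_sum big_mkcond /=; apply: eq_bigr => z _; rewrite inE.
  by case: (z != y0).
have N2 : 2 <= N.
    by have := max_card (mem [set y0; x0]); rewrite cards2 yx.
have : 6 * #|Dset| <= (N - 4) + (N - 2) * (N - 2).
  have -> : 6 * #|Dset| = \sum_z 2 * dg z by rewrite -big_distrr /= -E3 mulnA.
  rewrite (bigD1 y0) //=; apply: leq_add => //.
  apply: (@leq_trans (\sum_(z | z != y0) (z != x0) * (N - 2))).
    by apply: leq_sum => z _; exact: Hz.
  by rewrite -big_distrl /= Hc.
move: N2 N4; rewrite -/N; nia.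
Qed.

End Main.

Lemma arith N d : N %% 12 \in [:: 4; 8] -> 6 * d + 2 <= (N - 1) * (N - 2) ->
  d <= ((N - 1) * ((N - 2) %/ 2)) %/ 3 - 1.
Proof.
move=> H; have E := divn_eq N 12; move: (N %/ 12) E => q E.
move: H; rewrite !inE => /orP[] /eqP r; rewrite r in E; subst N.
- have -> : q * 12 + 4 - 2 = (6 * q + 1) * 2 by lia.
  have -> : q * 12 + 4 - 1 = (4 * q + 1) * 3 by lia.
  rewrite (mulnK (6*q+1) (isT : 0 < 2)).
  have -> : (4*q+1)*3*(6*q+1) = ((4*q+1)*(6*q+1))*3 by ring.
  rewrite (mulnK _ (isT : 0 < 3)).
  have -> : (4 * q + 1) * 3 * ((6 * q + 1) * 2) = 6 * ((4*q+1)*(6*q+1)) by ring.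
  set m := (4*q+1)*(6*q+1); clearbody m; lia.
- have -> : q * 12 + 8 - 2 = (6 * q + 3) * 2 by lia.
  have -> : q * 12 + 8 - 1 = (12 * q + 7) by lia.
  rewrite (mulnK (6*q+3) (isT : 0 < 2)).
  have -> : (12*q+7)*(6*q+3) = ((12*q+7)*(2*q+1))*3 by ring.
  rewrite (mulnK _ (isT : 0 < 3)).
  have -> : (12 * q + 7) * ((6 * q + 3) * 2) = 6 * ((12*q+7)*(2*q+1)) by ring.
  set m := (12*q+7)*(2*q+1); clearbody m; lia.
Qed.

Lemma sum_rows u n (C : {set 'M[bool]_(u, n.+1)}) : is_OOC 4 2 C ->
  \sum_(i < u) #|Dset C i| = 4 * #|C|.
Proof.
move=> HC.
under eq_bigr do rewrite cardE_sum.
rewrite exchange_big /=.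
transitivity (\sum_(A : 'M[bool]_(u, n.+1)) \sum_(j : 'I_n.+1)
                \sum_(i < u) ((A, j) \in Dset C i : nat)).
  by rewrite [RHS]pair_bigA; apply: eq_bigr => -[A j] _.
rewrite mulnC -sum_nat_const [RHS]big_mkcond /=; apply: eq_bigr => A _.
case: (boolP (A \in C)) => AC.
- rewrite -(HC.1 A AC) /hweight cardE_sum.
  transitivity (\sum_(k < u) \sum_(j < n.+1) (A k j : nat)).
    rewrite exchange_big /=.
    apply: eq_bigr => j _; apply: eq_bigr => k _; by rewrite !inE AC.
  rewrite pair_bigA; apply: eq_bigr => -[k j] _; by rewrite inE.
- by apply: big1 => j _; apply: big1 => k _; rewrite !inE (negbTE AC).
Qed.

Theorem lemma5p4 (u v : nat) :
  0 < u -> 0 < v -> ~~ odd v ->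
  (u * v) %% 12 \in [:: 4; 8] ->
  forall C : {set 'M[bool]_(u, v)}, is_OOC 4 2 C ->
  #|C| <= lemma5p4_bound u v.
Proof.
case: v => [//|n] _ _ ev Hmod C HC.
have cardP : #|{: 'I_u * 'I_n.+1}| = u * n.+1 by rewrite card_prod !card_ord.
have Hrow : forall i : 'I_u,
    #|Dset C i| <= ((u * n.+1 - 1) * ((u * n.+1 - 2) %/ 2)) %/ 3 - 1.
  move=> i; apply: arith => //.
  have := row_bound HC i ev; rewrite cardP; apply.
  by move: Hmod; rewrite !inE => /orP[] /eqP h; rewrite -(modn_dvdm _ (isT : 4 %| 12)) h.
rewrite /lemma5p4_bound leq_divRL // mulnC -(sum_rows HC).
apply: (@leq_trans (\sum_(i < u) (((u * n.+1 - 1) * ((u * n.+1 - 2) %/ 2)) %/ 3 - 1))).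
  by apply: leq_sum => i _; exact: Hrow.
by rewrite big_const_ord iter_addn_0 mulnC.
Qed.
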